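(* Let $v=v(n)$ and $r=r(n)$ be positive integers with $v\to\infty$, $r\to\infty$ and $r=o(v)$. If the random vector $\mathbf d=(d_1,\dots,d_v)$ has distribution $\mathrm{Multi}(v,2v+r)|_{\ge2}$, then a.a.s. $D_3(\mathbf d)\sim r$ and \[\sum_{i:d_i\ge3}\binom{d_i}{2}<4r.\]
   Context: For positive integers $v,t$, $\mathrm{Multi}(v,t)$ is the multinomial distribution on vectors $(d_1,\dots,d_v)$ of nonnegative integers summing to $t$, with $\mathbf P[d_1=j_1,\dots,d_v=j_v]=\frac{t!}{v^t j_1!\cdots j_v!}$ (the numbers of balls in $v$ bins when $t$ balls are thrown independently and uniformly). $\mathrm{Multi}(v,t)|_{\ge2}$ is this distribution conditioned on the event that every $d_i\ge2$. $D_3(\mathbf d)=|\{i:d_i=3\}|$. A.a.s. means with probability $1-o(1)$ as $n\to\infty$. *)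

(* Defs.v *)
From HB Require Import structures.
From mathcomp Require Import all_boot all_order all_algebra.
Set Implicit Arguments. Unset Strict Implicit. Unset Printing Implicit Defensive.
Import Order.TTheory GRing.Theory Num.Theory.
Local Open Scope ring_scope.

(* Candidate outcome vectors (d_1,...,d_v); any vector of nonnegative
   integers summing to t has entries <= t, so 'I_t.+1 entries suffice. *)
Definition vec (v t : nat) := {ffun 'I_v -> 'I_t.+1}.

Definition multi_pmf (v t : nat) (d : vec v t) : rat :=
  if (\sum_(i < v) (d i : nat))%N == t
  then (t`!)%:R / ((v ^ t)%:R * (\prod_(i < v) ((d i : nat)`!))%:R)
  else 0.

Definition all_ge2 (v t : nat) (d : vec v t) : bool := [forall i, 2 <= (d i : nat)]%N.

Definition cond_prob (v t : nat) (A : pred (vec v t)) : rat :=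
  (\sum_(d : vec v t | all_ge2 d && A d) multi_pmf d)
  / (\sum_(d : vec v t | all_ge2 d) multi_pmf d).

Definition D3 (v t : nat) (d : vec v t) : nat := #|[set i | (d i : nat) == 3]%N|.

Definition big_binom_sum (v t : nat) (d : vec v t) : nat :=
  (\sum_(i < v | 3 <= (d i : nat)) 'C(d i, 2))%N.

Definition good_event (v t r : nat) (eps : rat) : pred (vec v t) :=
  fun d => (`|(D3 d)%:R - r%:R| <= eps * r%:R :> rat) && (big_binom_sum d < 4 * r)%N.

Arguments good_event : clear implicits.

(* Main.v *)
Require Import Defs.
From HB Require Import structures.
From mathcomp Require Import all_boot all_order all_algebra.
Import Order.TTheory GRing.Theory Num.Theory.
Local Open Scope ring_scope.

Lemma prod_scaleX (I : finType) (a : I -> rat) (n : I -> nat) :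
  \prod_i (a i *: 'X^(n i)) = (\prod_i a i) *: ('X^(\sum_i n i) : {poly rat}).
Proof.
under eq_bigr do rewrite -mul_polyC.
by rewrite big_split /= prodrXr -mul_polyC rmorph_prod.
Qed.

Lemma ffun_coef (v t s : nat) (G : 'I_v -> nat -> rat) :
  \sum_(d : {ffun 'I_v -> 'I_t.+1} | (\sum_i (d i : nat))%N == s) \prod_i G i (d i)
  = (\prod_(i < v) \sum_(j < t.+1) G i j *: 'X^j)`_s.
Proof.
rewrite bigA_distr_bigA /=.
rewrite (eq_bigr _ (fun (f : {ffun 'I_v -> 'I_t.+1}) _ => prod_scaleX _ (fun i => G i (f i)) (fun i => nat_of_ord (f i)))).
by rewrite coef_sumMXn; apply: eq_bigl => f; rewrite eq_sym.
Qed.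

Definition Fw (j : nat) : rat := if (2 <= j)%N then (j`!)%:R^-1 else 0.
Definition Pt (t : nat) : {poly rat} := \poly_(j < t.+1) Fw j.
Definition nonneg (p : {poly rat}) := forall k, 0 <= p`_k.

Lemma Fw_ge0 j : 0 <= Fw j.
Proof. by rewrite /Fw; case: ifP => _ //; rewrite invr_ge0 ler0n. Qed.

Lemma nonneg_Pt t : nonneg (Pt t).
Proof. by move=> k; rewrite coef_poly; case: ifP => // _; apply: Fw_ge0. Qed.

Lemma nonnegM p q : nonneg p -> nonneg q -> nonneg (p * q).
Proof.
move=> hp hq k; rewrite coefM; apply: sumr_ge0 => j _; exact: mulr_ge0.
Qed.

Lemma nonnegX p m : nonneg p -> nonneg (p ^+ m).
Proof.
move=> hp; elim: m => [|m IH]; first by move=> k; rewrite expr0 coefC; case: ifP.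
by rewrite exprS; apply: nonnegM.
Qed.

Lemma coefM_ge p q i j : nonneg p -> nonneg q -> (j <= i)%N ->
  p`_j * q`_(i - j) <= (p * q)`_i.
Proof.
move=> hp hq hji; rewrite coefM.
have hj : (j < i.+1)%N by [].
rewrite (bigD1 (Ordinal hj)) //= lerDl.
by apply: sumr_ge0 => k _; apply: mulr_ge0.
Qed.

Lemma le_upto (A B C : {poly rat}) K s : (forall k, (k <= K)%N -> A`_k <= B`_k) -> nonneg C ->
  (s <= K)%N -> (A * C)`_s <= (B * C)`_s.
Proof.
move=> hAB hC hs; rewrite !coefM; apply: ler_sum => j _.
apply: ler_wpM2r => //; apply: hAB.
by rewrite -ltnS; apply: leq_trans (ltn_ord j) _.
Qed.

Lemma rat_calc : 2%:R * 3%:R^-1 + 3%:R^-1 = 1 :> rat.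
Proof. by apply/eqP. Qed.

Lemma Fw_step k : 2%:R * Fw k.+1 + 3%:R^-1 * Fw k <= Fw k.+1 *+ k.+1.
Proof.
case: k => [|[|k]]; rewrite /Fw /=.
- by rewrite !mulr0 addr0.
- by rewrite mulr0 addr0 -mulr_natl.
rewrite (factS k.+2) natrM invfM.
set a := (k.+3%:R : rat)^-1; set b := ((k.+2)`!%:R : rat)^-1.
have hb : 0 <= b by rewrite invr_ge0 ler0n.
have ha1 : a *+ k.+3 = 1 by rewrite -mulr_natr /a mulVf // pnatr_eq0.
rewrite -mulrnAl ha1 mul1r.
rewrite mulrA -mulrDl.
apply: (le_trans (ler_wpM2r hb (_ : _ <= 1))); last by rewrite mul1r.
rewrite -rat_calc lerD2r ler_pM2l // ler_pV2 ?inE ?ltr0n //.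
  by rewrite ler_nat.
by rewrite unitfE pnatr_eq0.
Qed.

Lemma XderivP t k : (k <= t)%N ->
  (2%:R *: Pt t + 3%:R^-1 *: ('X * Pt t))`_k <= ('X * (Pt t)^`())`_k.
Proof.
rewrite coefD !coefZ !coefXM coef_deriv.
case: k => [|k] hk /=.
  by rewrite coef_poly /= /Fw /= !mulr0 addr0.
rewrite !coef_poly ltnS hk ltnS (ltnW hk).
exact: Fw_step.
Qed.

Lemma ratio t m s : (0 < m)%N -> (s.+1 <= t)%N ->
  (2%:R * ((Pt t)^+m)`_s.+1 + 3%:R^-1 * ((Pt t)^+m)`_s) *+ m <= ((Pt t)^+m)`_s.+1 *+ s.+1.
Proof.
move=> hm hs.
set P := Pt t.
rewrite -coef_deriv deriv_exp coefMn lerMn2r; apply/orP; right.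
have -> : (P^`() * P^+m.-1)`_s = ('X * P^`() * P^+m.-1)`_s.+1 by rewrite -mulrA coefXM.
apply: le_trans _ (@le_upto _ _ _ _ _ (XderivP t) (@nonnegX _ m.-1 (nonneg_Pt t)) hs).
rewrite [in X in _ <= X]mulrDl -!scalerAl coefD !coefZ -mulrA -exprS prednK // coefXM.
by [].
Qed.

Lemma step t m r s : (0 < m)%N -> (s.+1 <= 2 * m + r)%N -> (2 * m + r <= t)%N ->
  ((Pt t)^+m)`_s <= (3%:R * r%:R / m%:R) * ((Pt t)^+m)`_s.+1.
Proof.
move=> hm hs hN.
have h := @ratio t m s hm (leq_trans hs hN).
set cs := ((Pt t)^+m)`_s.+1 in h *; set cp := ((Pt t)^+m)`_s in h *.
have hcs : 0 <= cs by apply: nonnegX; apply: nonneg_Pt.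
have hM : 0 < (m%:R : rat) by rewrite ltr0n.
rewrite -mulr_natr -[cs *+ _]mulr_natr in h.
have hS : cs * s.+1%:R <= cs * (2%:R * m%:R + r%:R).
  by apply: ler_wpM2l => //; rewrite -natrM -natrD ler_nat.
have h2 := le_trans h hS.
rewrite mulrDl mulrDr -mulrA [cs * (_ * _)]mulrCA mulrA lerD2l in h2.
have h3 : cp * m%:R <= 3%:R * (r%:R * cs).
  have -> : cp * m%:R = 3%:R * (3%:R^-1 * cp * m%:R) by rewrite !mulrA mulfV ?mul1r // pnatr_eq0.
  by apply: ler_wpM2l => //; rewrite [cs * _]mulrC in h2.
rewrite -(ler_pM2r hM) [X in _ <= X]mulrAC divfK ?gt_eqF // -mulrA.
exact: h3.
Qed.

Lemma chain t m r j : (0 < m)%N -> (2 * m + r <= t)%N -> (j <= 2 * m + r)%N ->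
  ((Pt t)^+m)`_(2 * m + r - j) <= (3%:R * r%:R / m%:R) ^+ j * ((Pt t)^+m)`_(2 * m + r).
Proof.
move=> hm hN; elim: j => [|j IH] hj; first by rewrite subn0 expr0 mul1r.
have hy : 0 <= 3%:R * r%:R / m%:R :> rat by rewrite !mulr_ge0 ?invr_ge0 ?ler0n.
have hs : ((2 * m + r - j.+1).+1 = 2 * m + r - j)%N by rewrite subnS prednK // subn_gt0.
apply: le_trans (@step t m r _ hm _ hN) _; first by rewrite hs leq_subr.
rewrite hs exprS -[in X in _ <= X]mulrA; apply: ler_wpM2l => //.
exact: IH (ltnW hj).
Qed.

Lemma geom n : \sum_(k < n) (2%:R^-1 : rat) ^+ k = 2%:R - 2%:R * (2%:R^-1) ^+ n.
Proof.
elim: n => [|n IH]; first by rewrite big_ord0 expr0 mulr1 subrr.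
rewrite big_ord_recr /= IH exprS mulrA mulfV // mul1r.
set z := (2%:R^-1 : rat) ^+ n.
rewrite -addrA; congr (_ + _).
by rewrite mulr_natl mulr2n opprD -addrA addNr addr0.
Qed.

Lemma geom_le n : \sum_(k < n) (2%:R^-1 : rat) ^+ k <= 2%:R.
Proof. by rewrite geom gerBl mulr_ge0 // exprn_ge0 // invr_ge0. Qed.

Definition qb (j : nat) : nat := if (4 <= j)%N then 'C(j, 2) else 0%N.
Definition gpoly t : {poly rat} := \poly_(j < t.+1) ((qb j)%:R * Fw j).

Lemma gcoef_le1 j : (qb j)%:R * Fw j <= 1.
Proof.
rewrite /qb /Fw; case: ifP => h4; last by rewrite mul0r.
have h2 : (2 <= j)%N by apply: leq_trans h4.
rewrite h2; have hf : (0 : rat) < (j`!)%:R by rewrite ltr0n fact_gt0.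
rewrite ler_pdivrMr // mul1r ler_nat.
rewrite -(bin_fact h2); apply: leq_pmulr.
by rewrite muln_gt0 !fact_gt0.
Qed.

Lemma gcoef_ge0 j : 0 <= (qb j)%:R * Fw j.
Proof. by rewrite mulr_ge0 ?ler0n ?Fw_ge0. Qed.

Lemma gbound m r : (0 < m)%N -> 3%:R * r%:R / m%:R <= 2%:R^-1 :> rat ->
  (gpoly (2 * m + r).+2 * (Pt (2 * m + r).+2) ^+ m)`_(2 * m + r).+2
  <= (16%:R * (3%:R * r%:R / m%:R) ^+ 2 * ((Pt (2 * m + r).+2) ^+ m)`_(2 * m + r)) * 2%:R.
Proof.
move=> hm hy2.
set N := (2 * m + r)%N; set t := N.+2; set y := 3%:R * r%:R / m%:R; set x := (2%:R^-1 : rat).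
set c := fun i => ((Pt t) ^+ m)`_i.
have hc : forall i, 0 <= c i by move=> i; apply: nonnegX; apply: nonneg_Pt.
have hy : 0 <= y by rewrite /y !mulr_ge0 ?invr_ge0 ?ler0n.
have hx : 0 <= x by rewrite invr_ge0.
rewrite coefM.
apply: le_trans (_ : _ <= \sum_(k < t.+1) (16%:R * y ^+ 2 * c N) * x ^+ k) _; last first.
  rewrite -mulr_sumr; apply: ler_wpM2l; last exact: geom_le.
  apply: mulr_ge0; [apply: mulr_ge0; [by []|exact: exprn_ge0] | exact: hc].
apply: ler_sum => -[k hk] _ /=.
rewrite coef_poly hk.
have hR : 0 <= 16%:R * y ^+ 2 * c N * x ^+ k.
  apply: mulr_ge0; last exact: exprn_ge0.
  apply: mulr_ge0; [apply: mulr_ge0; [by []|exact: exprn_ge0] | exact: hc].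
case: k hk hR => [|[|[|[|k]]]] hk hR; try by rewrite /qb /= mulr0n !mul0r.
apply: le_trans (_ : _ <= c (N - k.+2)%N) _.
  by apply: ler_piMl; [apply: hc | apply: gcoef_le1].
apply: le_trans (@chain t m r k.+2 hm (leqW (leqnSn N)) _) _.
  by rewrite -ltnS -ltnS.
rewrite -/c -/y [X in _ <= X]mulrAC; apply: ler_wpM2r; first exact: hc.
rewrite -[k.+4]/(4 + k)%N -[k.+2]/(2 + k)%N !exprD.
have e : 16%:R * x ^+ 4 = 1 by apply/eqP.
have key : forall a b : rat, 16%:R * a * (x ^+ 4 * b) = a * b.
  by move=> a b; rewrite [16%:R * a]mulrC -mulrA (mulrA 16%:R) e mul1r.
rewrite key.
apply: ler_wpM2l; first by rewrite exprn_ge0.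
by apply: lerXn2r; rewrite ?nnegrE.
Qed.

Definition Kc (v t : nat) : rat := (t`!)%:R / (v ^ t)%:R.

Lemma pmf_eq (v t : nat) (d : vec v t) :
  (all_ge2 d)%:R * multi_pmf d =
  ((\sum_i (d i : nat))%N == t)%:R * (Kc v t * \prod_i Fw (d i)).
Proof.
rewrite /multi_pmf; case: eqP => _; last by rewrite !mulr0 mul0r.
rewrite mul1r; case: (boolP (all_ge2 d)) => h.
  rewrite mul1r /Kc (eq_bigr (fun i => ((d i)`!)%:R^-1)); last first.
    by move=> i _; rewrite /Fw; move/forallP: h => ->.
  by rewrite prodfV -natr_prod invfM mulrA.
move/forallPn: h => [i hi].
by rewrite mul0r (bigD1 i) //= {1}/Fw (negbTE hi) mul0r mulr0.
Qed.

Lemma pmf_if (v t : nat) (d : vec v t) :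
  (if all_ge2 d then multi_pmf d else 0) =
  (if ((\sum_i (d i : nat))%N == t) then Kc v t * \prod_i Fw (d i) else 0).
Proof.
have := @pmf_eq v t d.
by case: (all_ge2 d); case: (_ == t); rewrite ?mul1r ?mul0r.
Qed.

Lemma prodP (v t : nat) : \prod_(i < v) \sum_(j < t.+1) Fw j *: 'X^j = (Pt t) ^+ v.
Proof. by rewrite /Pt poly_def prodr_const card_ord. Qed.

Lemma den_eq (v t : nat) :
  \sum_(d : vec v t | all_ge2 d) multi_pmf d = Kc v t * ((Pt t)^+v)`_t.
Proof.
rewrite big_mkcond /=.
under eq_bigr do rewrite pmf_if.
rewrite -big_mkcond /= -mulr_sumr.
have := @ffun_coef v t t (fun _ j => Fw j).
rewrite prodP /= => <-.
by [].
Qed.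

Definition Qd (v t : nat) (d : vec v t) : nat := (\sum_i qb (d i))%N.
Arguments Qd {v t} d.

Definition Gk (v : nat) (i k : 'I_v) (j : nat) : rat :=
  if k == i then (qb j)%:R * Fw j else Fw j.

Lemma prodG (v t : nat) (d : vec v t) i :
  \prod_k Gk v i k (d k) = (qb (d i))%:R * \prod_k Fw (d k).
Proof.
rewrite (bigD1 i) //= [in RHS](bigD1 i) //= /Gk eqxx -mulrA; congr (_ * (_ * _)).
by apply: eq_bigr => k /negbTE ->.
Qed.

Lemma prodGpoly (v t : nat) (i : 'I_v) :
  \prod_k \sum_(j < t.+1) Gk v i k j *: 'X^j = gpoly t * (Pt t) ^+ v.-1.
Proof.
rewrite (bigD1 i) //= {1}/Gk eqxx /gpoly poly_def; congr (_ * _).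
rewrite (eq_bigr (fun _ => Pt t)); last first.
  by move=> k /negbTE hk; rewrite /Pt poly_def; apply: eq_bigr => j _; rewrite /Gk hk.
by rewrite prodr_const cardC1 card_ord.
Qed.

Lemma Q_eq (v t : nat) :
  \sum_(d : vec v t | all_ge2 d) multi_pmf d * (Qd d)%:R
  = Kc v t * (v%:R * (gpoly t * (Pt t)^+v.-1)`_t).
Proof.
rewrite big_mkcond /=.
transitivity (\sum_(d : vec v t | ((\sum_i (d i : nat))%N == t))
                 Kc v t * (\prod_i Fw (d i) * (Qd d)%:R)).
  rewrite [RHS]big_mkcond /=; apply: eq_bigr => d _.
  have := @pmf_if v t d.
  case: (all_ge2 d); case: (_ == t) => /= h.
  - by rewrite h mulrA.
  - by rewrite h mul0r.
  - by rewrite mulrA -h mul0r.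
  - by [].
rewrite -mulr_sumr; congr (_ * _).
transitivity (\sum_(i < v) \sum_(d : vec v t | ((\sum_i (d i : nat))%N == t))
                 \prod_k Gk v i k (d k)).
  rewrite exchange_big /=; apply: eq_bigr => d _.
  rewrite /Qd natr_sum mulr_sumr; apply: eq_bigr => i _.
  by rewrite prodG mulrC.
under eq_bigr do rewrite (@ffun_coef v t t (Gk v _)) prodGpoly.
by rewrite sumr_const card_ord mulr_natl.
Qed.

Lemma split_pt (n : nat) : (2 <= n)%N ->
  (n - 2 = (n == 3) + (if 4 <= n then n - 2 else 0))%N.
Proof. by case: n => [|[|[|[|n]]]]. Qed.

Lemma E_le_q (n : nat) : ((if 4 <= n then n - 2 else 0) <= qb n)%N.
Proof.
rewrite /qb; case: ifP => // _.
case: n => [|m] //; rewrite binS bin1.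
by apply: leq_trans (leq_addl _ _); rewrite subSS leq_subr.
Qed.

Lemma binom_pt (n : nat) :
  ((if 3 <= n then 'C(n, 2) else 0) = 3 * (n == 3) + qb n)%N.
Proof. by rewrite /qb; case: n => [|[|[|[|n]]]]. Qed.

Lemma comb (v r : nat) (eps c : rat) (d : vec v (2 * v + r)) :
  all_ge2 d -> (\sum_i (d i : nat))%N = (2 * v + r)%N ->
  (Qd d)%:R < c * r%:R -> c <= eps -> c <= 1 ->
  good_event v (2 * v + r) r eps d.
Proof.
move=> hge hsum hQ hce hc1.
pose dn i := nat_of_ord (d i).
have hge2 : forall i, (2 <= dn i)%N by move/forallP: hge.
set D := (\sum_i (dn i == 3 : nat))%N.
set E := (\sum_i (if 4 <= dn i then dn i - 2 else 0))%N.
have h1 : (\sum_i (dn i - 2))%N = r.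
  apply/eqP; rewrite -(eqn_add2l (2 * v)).
  rewrite [X in (X + _ == _)%N](_ : _ = \sum_(i < v) 2)%N; last by rewrite sum_nat_const card_ord mulnC.
  rewrite -big_split /=.
  rewrite (eq_bigr (fun i => dn i)) ?hsum // => i _.
  by rewrite subnKC.
have h2 : (D + E = r)%N.
  rewrite -h1 /D /E -big_split; apply: eq_bigr => i _.
  by rewrite [in RHS](@split_pt (dn i) (hge2 i)).
have h3 : (E <= Qd d)%N by rewrite /Qd; apply: leq_sum => i _; apply: E_le_q.
have h4 : big_binom_sum d = (3 * D + Qd d)%N.
  rewrite /big_binom_sum big_mkcond /= /D /Qd big_distrr -big_split /=.
  by apply: eq_bigr => i _; apply: binom_pt.
have h5 : D3 d = D.
  rewrite /D3 -sum1_card big_mkcond /=; apply: eq_bigr => i _.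
  by rewrite inE; case: (_ == _).
have hDr : (D <= r)%N by rewrite -h2 leq_addr.
have hQr : (Qd d < r)%N.
  rewrite -(ltr_nat rat); apply: lt_le_trans hQ _.
  by rewrite -[X in _ <= X]mul1r; apply: ler_wpM2r.
rewrite /good_event h4 h5; apply/andP; split.
  have -> : (D%:R - r%:R : rat) = - E%:R by rewrite -h2 natrD opprD addrA subrr add0r.
  rewrite normrN ger0_norm ?ler0n //.
  apply: (le_trans (_ : (E%:R : rat) <= (Qd d)%:R)); first by rewrite ler_nat.
  apply: le_trans (ltW hQ) _; by apply: ler_wpM2r.
apply: (@leq_ltn_trans (3 * r + Qd d)); first by rewrite leq_add2r leq_mul2l hDr orbT.
by rewrite (_ : 4 * r = 3 * r + r)%N ?ltn_add2l // mulSnr.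
Qed.

Lemma pmf_ge0 (v t : nat) (d : vec v t) : 0 <= multi_pmf d.
Proof.
rewrite /multi_pmf; case: ifP => // _.
by rewrite divr_ge0 // ?mulr_ge0 // ler0n.
Qed.

Lemma Qd_ge0 (v t : nat) (d : vec v t) : 0 <= (Qd d)%:R :> rat.
Proof. by rewrite ler0n. Qed.

Lemma markov_pt (v r : nat) (eps c : rat) (d : vec v (2 * v + r)) :
  c <= eps -> c <= 1 -> all_ge2 d ->
  (if ~~ good_event v (2 * v + r) r eps d then multi_pmf d else 0) * (c * r%:R)
  <= multi_pmf d * (Qd d)%:R.
Proof.
move=> hce hc1 hge.
have h0 : 0 <= multi_pmf d * (Qd d)%:R by rewrite mulr_ge0 ?pmf_ge0 ?Qd_ge0.
case: ifP => hg; last by rewrite mul0r.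
case: (boolP ((\sum_i (d i : nat))%N == (2 * v + r)%N)) => hs; last first.
  by rewrite /multi_pmf (negbTE hs) !mul0r.
apply: ler_wpM2l; first exact: pmf_ge0.
rewrite leNgt; apply/negP => hlt.
by move: hg; rewrite (@comb v r eps c d hge (eqP hs) hlt hce hc1).
Qed.

Lemma markov (v r : nat) (eps c : rat) :
  c <= eps -> c <= 1 ->
  (\sum_(d : vec v (2 * v + r) | all_ge2 d && ~~ good_event v (2 * v + r) r eps d) multi_pmf d) * (c * r%:R)
  <= \sum_(d : vec v (2 * v + r) | all_ge2 d) multi_pmf d * (Qd d)%:R.
Proof.
move=> hce hc1.
rewrite big_mkcondr /= mulr_suml; apply: ler_sum => d hge.
exact: markov_pt.
Qed.

Lemma P2 t : (2 <= t)%N -> (Pt t)`_2 = 2%:R^-1.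
Proof. by move=> ht; rewrite coef_poly ltnS ht /Fw. Qed.

Lemma cN_le t m s : (2 <= t)%N -> ((Pt t)^+m)`_s <= 2%:R * ((Pt t)^+m.+1)`_s.+2.
Proof.
move=> ht.
have h := @coefM_ge (Pt t) ((Pt t)^+m) s.+2 2 (nonneg_Pt t) (@nonnegX _ m (nonneg_Pt t)) isT.
rewrite -exprS P2 // in h.
rewrite !subSS subn0 in h.
have e : ((Pt t)^+m)`_s = 2%:R * (2%:R^-1 * ((Pt t)^+m)`_s) by rewrite mulrA mulfV ?mul1r.
by rewrite {1}e; apply: ler_wpM2l.
Qed.

Lemma a_pos t m k : (2 <= k)%N -> (k <= t)%N -> 0 < ((Pt t)^+m.+1)`_(2 * m + k).
Proof.
move=> hk hkt; elim: m => [|m IH].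
  rewrite expr1 muln0 add0n coef_poly ltnS hkt /Fw hk.
  by rewrite invr_gt0 ltr0n fact_gt0.
have -> : (2 * m.+1 + k = (2 * m + k).+2)%N by rewrite mulnS addnA add2n.
have h := @coefM_ge (Pt t) ((Pt t)^+m.+1) (2 * m + k).+2 2 (nonneg_Pt t) (@nonnegX _ m.+1 (nonneg_Pt t)) isT.
rewrite -exprS P2 ?(leq_trans hk) // in h.
apply: lt_le_trans h.
apply: mulr_gt0 => //.
by rewrite !subSS subn0.
Qed.

Lemma Kc_ge0 v t : 0 <= Kc v t.
Proof. by rewrite /Kc divr_ge0 ?ler0n. Qed.

Lemma scal64 (x z : rat) : 16%:R * x * (2%:R * z) * 2%:R = 64%:R * x * z.
Proof.
rewrite !mulr_natl !mulr_natr !mulrnAl !mulrnAr -!mulrnA.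
by have -> : (2 * (16 * 2) = 64)%N by [].
Qed.

Lemma bound_B m R : (0 < m)%N -> 3%:R * R%:R / m%:R <= 2%:R^-1 :> rat ->
  \sum_(d : vec m.+1 (2 * m.+1 + R) | all_ge2 d) multi_pmf d * (Qd d)%:R
  <= 64%:R * m.+1%:R * (3%:R * R%:R / m%:R)^+2 *
     \sum_(d : vec m.+1 (2 * m.+1 + R) | all_ge2 d) multi_pmf d.
Proof.
move=> hm hy.
rewrite Q_eq den_eq /=.
have ht : (2 * m.+1 + R = (2 * m + R).+2)%N by rewrite mulnS add2n.
rewrite ht.
have hg := @gbound m R hm hy.
have hc := @cN_le (2 * m + R).+2 m (2 * m + R) isT.
set y := 3%:R * R%:R / m%:R in hg *.
set a := ((Pt (2 * m + R).+2) ^+ m.+1)`_(2 * m + R).+2 in hc *.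
set cN := ((Pt (2 * m + R).+2) ^+ m)`_(2 * m + R) in hg hc *.
set G := (gpoly (2 * m + R).+2 * (Pt (2 * m + R).+2) ^+ m)`_(2 * m + R).+2 in hg *.
set K := Kc _ _.
have hK : 0 <= K by apply: Kc_ge0.
have hy0 : 0 <= y by rewrite /y !mulr_ge0 ?invr_ge0 ?ler0n.
apply: le_trans (_ : _ <= K * (m.+1%:R * (16%:R * y ^+ 2 * (2%:R * a) * 2%:R))) _.
  apply: ler_wpM2l => //; apply: ler_wpM2l => //.
  apply: le_trans hg _; apply: ler_wpM2r => //; apply: ler_wpM2l => //.
  by rewrite mulr_ge0 ?exprn_ge0.
rewrite (scal64 (y ^+ 2) a).
move: (64%:R : rat) => k.
by rewrite (AC (1*(1*3)) ((3*2*4)*(1*5))).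
Qed.

Lemma half_cancel (x : rat) n : (0 < n)%N -> (x / (n * 2)%:R) *+ n = x / 2%:R.
Proof.
move=> hn; rewrite natrM invfM mulrA -mulrnAl -mulrnAr.
by rewrite -[_^-1 *+ n]mulr_natr mulVf ?pnatr_eq0 -?lt0n // mulr1.
Qed.

Lemma boundC m R n (c dl : rat) : (2304 <= n)%N -> (0 < m)%N -> 0 < c -> c <= 1 -> 0 < dl -> dl <= 1 ->
  R%:R <= (c * dl / (n * 2)%:R) * m.+1%:R ->
  (3%:R * R%:R / m%:R <= 2%:R^-1 :> rat) /\
  64%:R * m.+1%:R * (3%:R * R%:R / m%:R)^+2 <= dl / 2%:R * (c * R%:R).
Proof.
move=> hn hm hc hc1 hd hd1 hR.
have hn0 : (0 < n)%N by apply: leq_trans hn.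
set e := c * dl / (n * 2)%:R in hR.
set M : rat := m%:R.
set Rr : rat := R%:R.
set V : rat := m.+1%:R.
set y := 3%:R * Rr / M.
have hM : 0 < M by rewrite ltr0n.
have hR0 : 0 <= Rr by rewrite ler0n.
have he0 : 0 <= e by rewrite /e !mulr_ge0 ?invr_ge0 ?ler0n ?ltW.
have hV : V <= M *+ 2.
  have -> : M *+ 2 = (m * 2)%:R by rewrite /M natrM mulr_natr.
  by rewrite /V ler_nat muln2 -addnn -add1n leq_add2r.
have hMy : y * M = Rr *+ 3 by rewrite /y divfK ?gt_eqF // mulr_natl.
have hy0 : 0 <= y by rewrite /y !mulr_ge0 ?invr_ge0 ?ler0n ?ltW.
have hy6 : y <= e *+ 6.
  rewrite -(ler_pM2r hM) hMy.
  apply: le_trans (_ : Rr *+ 3 <= (e * (M *+ 2)) *+ 3) _.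
    rewrite lerMn2r /=; apply: le_trans hR _; exact: ler_wpM2l.
  by rewrite mulrnAr -mulrnA mulrnAl.
have hVy : V * y <= Rr *+ 6.
  apply: le_trans (_ : V * y <= (M *+ 2) * y) _; first exact: ler_wpM2r.
  by rewrite mulrnAl [M * y]mulrC hMy -mulrnA (_ : (3 * 2 = 6)%N).
split.
  apply: le_trans hy6 _.
  apply: le_trans (_ : e *+ 6 <= e *+ n) _; first by apply: ler_wpMn2l => //; apply: leq_trans hn.
  rewrite /e half_cancel //.
  rewrite -[X in _ <= X]mul1r; apply: ler_wpM2r; first by rewrite invr_ge0.
  exact: mulr_ile1 (ltW hc) (ltW hd) hc1 hd1.
rewrite (mulr_natl V 64) mulrnAl.
apply: le_trans (_ : _ <= ((Rr *+ 6) * (e *+ 6)) *+ 64) _.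
  rewrite lerMn2r /= expr2 mulrA.
  apply: ler_pM => //; by rewrite mulr_ge0 // ler0n.
rewrite mulrnAl mulrnAr -!mulrnA.
apply: le_trans (_ : _ <= (Rr * e) *+ n) _.
  by apply: ler_wpMn2l; [rewrite mulr_ge0 | apply: leq_trans hn].
rewrite /e mulrA half_cancel //.
by rewrite [X in X <= _](AC ((1*2)*1) ((3*4)*(2*1))).
Qed.

Lemma cond_prob_ge0 (v t : nat) (A : pred (vec v t)) : 0 <= cond_prob A.
Proof.
by rewrite /cond_prob divr_ge0 // sumr_ge0 // => d _; apply: pmf_ge0.
Qed.

Lemma den_pos m R :
  0 < \sum_(d : vec m.+1 (2 * m.+1 + R) | all_ge2 d) multi_pmf d.
Proof.
rewrite den_eq.
have ht : (2 * m.+1 + R = 2 * m + R.+2)%N by rewrite mulnS add2n !addnS !addSn.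
rewrite ht; apply: mulr_gt0.
  by rewrite /Kc divr_gt0 // ltr0n ?fact_gt0 // expn_gt0.
apply: a_pos => //.
by rewrite leq_addl.
Qed.

Theorem mainTheorem13 (v r : nat -> nat)
  (v_pos : forall n, (0 < v n)%N) (r_pos : forall n, (0 < r n)%N)
  (v_inf : forall M : nat, exists N : nat, forall n, (N <= n)%N -> (M <= v n)%N)
  (r_inf : forall M : nat, exists N : nat, forall n, (N <= n)%N -> (M <= r n)%N)
  (r_small : forall e : rat, 0 < e ->
     exists N : nat, forall n, (N <= n)%N -> (r n)%:R <= e * (v n)%:R) :
  forall eps : rat, 0 < eps ->
  forall delta : rat, 0 < delta ->
  exists N : nat, forall n, (N <= n)%N ->
    1 - delta < cond_prob (good_event (v n) (2 * v n + r n)%N (r n) eps).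
Proof.
move=> eps heps dl hdl.
case: (lerP dl 1) => hd1; last first.
  exists 0%N => n _; apply: (lt_le_trans _ (@cond_prob_ge0 _ _ _)).
  by rewrite subr_lt0.
have [c [hc0 hce hc1]] : exists c : rat, [/\ 0 < c, c <= eps & c <= 1].
  by case: (lerP eps 1) => h; [exists eps | exists 1]; split => //; apply: ltW.
have [K hK] : exists K : nat, (2304 <= K)%N by exists 2304%N.
have he : 0 < c * dl / (K * 2)%:R.
  by rewrite divr_gt0 ?mulr_gt0 // ltr0n muln_gt0 andbT; apply: leq_trans hK.
have [N1 hN1] := r_small _ he.
have [N2 hN2] := v_inf 2%N.
exists (maxn N1 N2) => n hn.
have h1 : (N1 <= n)%N by apply: leq_trans hn; apply: leq_maxl.
have h2 : (N2 <= n)%N by apply: leq_trans hn; apply: leq_maxr.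
move: (hN1 n h1) (hN2 n h2) (r_pos n); move: (v n) (r n) => V R hRV hV2 hR0.
case: V hRV hV2 => [|m] // hRV hV2.
have hm : (0 < m)%N by [].
have [hy hC] := @boundC m R K c dl hK hm hc0 hc1 hdl hd1 hRV.
have hB := @bound_B m R hm hy.
have hM := @markov m.+1 R eps c hce hc1.
set Den := \sum_(d : vec m.+1 (2 * m.+1 + R) | all_ge2 d) multi_pmf d in hB hM *.
set Num := \sum_(d : vec m.+1 (2 * m.+1 + R) | all_ge2 d && good_event m.+1 (2 * m.+1 + R) R eps d) multi_pmf d.
set Bad := \sum_(d : vec m.+1 (2 * m.+1 + R) | all_ge2 d && ~~ good_event m.+1 (2 * m.+1 + R) R eps d) multi_pmf d in hM.
have hDpos : 0 < Den := den_pos m R.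
have hsplit : Den = Num + Bad by rewrite /Den (bigID (good_event m.+1 (2 * m.+1 + R) R eps)).
have hcR : 0 < c * R%:R by rewrite mulr_gt0 // ltr0n.
have hBad : Bad <= dl / 2%:R * Den.
  rewrite -(ler_pM2r hcR); apply: le_trans hM _; apply: le_trans hB _.
  rewrite [X in _ <= X]mulrAC; apply: ler_wpM2r => //; exact: ltW.
have hNum : Num = Den - Bad by rewrite hsplit addrK.
rewrite /cond_prob -/Den -/Num ltr_pdivlMr // mulrBl mul1r hNum ltrD2l ltrN2.
apply: le_lt_trans hBad _.
rewrite ltr_pM2r // ltr_pdivrMr // ltr_pMr //.
Qed.
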